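(* Let $G$ be a graph and suppose we have a valid edge partition of $G$. Then the number of cycles compatible with this edge partition equals the number of edges of $G$ which lie in the spanning-tree part of the edge partition and whose two ends lie in the same tree of the 2-forest.
   Context: A spanning 2-forest is a spanning forest with exactly two trees (a tree may be a single vertex). A valid edge partition of a graph is a bipartition of its edge set such that one part is the edge set of a spanning tree and the other part is the edge set of a spanning 2-forest. A valid edge partition induces a bipartition of the vertex set according to which tree of the 2-forest each vertex lies in. A cycle $C$ is compatible with the valid edge partition if all vertices of $C$ lie in the same part of this vertex bipartition and exactly one edge of $C$ lies in the spanning-tree part of the edge partition. *)

(* Defs.v *)
(* Finite multigraphs (parallel edges allowed) given by a
   finite vertex type V, a finite edge type E and endpoint maps src tgt. *)
From mathcomp Require Import all_boot.
Set Implicit Arguments. Unset Strict Implicit. Unset Printing Implicit Defensive.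

Section Graph.
Variables (V E : finType) (src tgt : E -> V).

Definition adj (S : {set E}) : rel V :=
  fun x y => [exists e in S, ((src e == x) && (tgt e == y))
                          || ((src e == y) && (tgt e == x))].

(* degree of x in the subgraph (V, S) (a loop counts twice) *)
Definition deg (S : {set E}) (x : V) : nat :=
  #|[set e in S | src e == x]| + #|[set e in S | tgt e == x]|.

Definition is_cycle (C : {set E}) : bool :=
  [&& C != set0,
      [forall x, (deg C x == 0) || (deg C x == 2)] &
      [forall e1 in C, forall e2 in C, connect (adj C) (src e1) (src e2)]].

Definition acyclic (S : {set E}) : bool :=
  [forall C : {set E}, (C \subset S) ==> ~~ is_cycle C].

Definition ncomp (S : {set E}) : nat :=
  #|[set [set y | connect (adj S) x y] | x : V]|.

Definition spanning_tree (T : {set E}) : bool :=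
  acyclic T && [forall x, forall y, connect (adj T) x y].

Definition spanning_2forest (F : {set E}) : bool :=
  acyclic F && (ncomp F == 2).

Definition valid_partition (T F : {set E}) : bool :=
  [&& T :&: F == set0, T :|: F == setT, spanning_tree T & spanning_2forest F].

Definition same_part (F : {set E}) (x y : V) : bool := connect (adj F) x y.

Definition compatible (T F C : {set E}) : bool :=
  [&& is_cycle C,
      [forall e1 in C, forall e2 in C,
         [&& same_part F (src e1) (src e2), same_part F (src e1) (tgt e2)
           & same_part F (tgt e1) (tgt e2)]]
    & #|C :&: T| == 1].

End Graph.

(* Main.v *)
Require Import Defs.
From mathcomp Require Import all_boot.
From mathcomp Require Import zify.
Set Implicit Arguments. Unset Strict Implicit. Unset Printing Implicit Defensive.

Section Proofs.
Variables (V E : finType) (src tgt : E -> V).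
Implicit Types (S A B P C : {set E}).
Local Notation adj := (adj src tgt).
Local Notation deg := (deg src tgt).
Local Notation is_cycle := (is_cycle src tgt).

Lemma adj_sym S : symmetric (adj S).
Proof.
move=> x y; apply/existsP/existsP => -[e /andP[eS H]]; exists e; by rewrite eS /= orbC.
Qed.

Lemma csym S : connect_sym (adj S).
Proof. exact/sym_connect_sym/adj_sym. Qed.

Lemma adjP (S : {set E}) x y : reflect (exists2 e, e \in S & ((src e == x) && (tgt e == y)) || ((src e == y) && (tgt e == x))) (adj S x y).
Proof.
by apply: (iffP existsP) => [[e /andP[eS H]]|[e eS H]]; exists e => //; rewrite eS.
Qed.

Lemma adj_edge S e : e \in S -> adj S (src e) (tgt e).
Proof. by move=> eS; apply/adjP; exists e => //; rewrite !eqxx. Qed.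

Lemma adj_mono A B : A \subset B -> forall x y, adj A x y -> adj B x y.
Proof. move=> AB x y /adjP[e eA H]; apply/adjP; exists e => //; exact: (subsetP AB). Qed.

Lemma connect_mono A B x y : A \subset B -> connect (adj A) x y -> connect (adj B) x y.
Proof.
by move=> AB; apply: connect_sub => u v /(adj_mono AB) H; apply: connect1.
Qed.

Lemma degE S v : deg S v = \sum_(e in S) ((src e == v) + (tgt e == v)).
Proof.
rewrite /Defs.deg big_split /= -!sum1_card.
congr (_ + _); rewrite [RHS]big_mkcond /= [LHS]big_mkcond /=;
  apply: eq_bigr => e _; rewrite !inE; by case: (e \in S); case: eqP.
Qed.

Lemma deg1 f v : deg [set f] v = (src f == v) + (tgt f == v).
Proof. by rewrite degE big_set1. Qed.

Lemma degU1 f P v : f \notin P -> deg (f |: P) v = deg [set f] v + deg P v.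
Proof. by move=> fP; rewrite !degE big_setU1 // big_set1. Qed.

Lemma sum_even (I : finType) (P : pred I) (F : I -> nat) :
  (forall i, P i -> ~~ odd (F i)) -> ~~ odd (\sum_(i | P i) F i).
Proof.
move=> H; apply: (big_ind (fun n => ~~ odd n)) => //.
by move=> m n /negbTE hm /negbTE hn; rewrite oddD hm hn.
Qed.

Lemma sum_eqin (A : {set V}) u : \sum_(x in A) (u == x) = (u \in A).
Proof.
case: (boolP (u \in A)) => uA.
  rewrite (bigD1 u) //= eqxx big1 // => x /andP[_ /negbTE]; by rewrite eq_sym => ->.
by rewrite big1 // => x xA; case: eqP xA uA => // <- ->.
Qed.


Lemma edge_deg e x y v : ((src e == x) && (tgt e == y)) || ((src e == y) && (tgt e == x)) ->
  (src e == v) + (tgt e == v) = (v == x) + (v == y).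
Proof.
by case/orP => /andP[/eqP-> /eqP->]; rewrite (eq_sym x) (eq_sym y) // addnC.
Qed.

Lemma path_edges S : forall p x, uniq (x :: p) -> path (adj S) x p -> p != [::] ->
  exists P, [/\ P \subset S,
    (forall h, h \in P -> (src h \in x :: p) && (tgt h \in x :: p)),
    (forall v, v \in x :: p -> connect (adj P) x v) &
    forall v, deg P v = (v == x) + (v == last x p) + 2 * ((v \in p) && (v != last x p))].
Proof.
elim=> [//|y q IH] x /= /andP[xNyq uyq] /andP[axy pq] _.
have /adjP[e eS He] := axy.
have xNy : x != y by apply: contraNneq xNyq => ->; rewrite mem_head.
case: q IH uyq pq xNyq He => [|z q] IH uyq pq xNyq He.
  exists [set e]; split.
  - by rewrite sub1set.
  - move=> h /set1P ->.
    by case/orP: He => /andP[/eqP-> /eqP->]; rewrite !inE !eqxx ?orbT.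
  - move=> v; rewrite !inE => /orP[/eqP->|/eqP->]; first exact: connect0.
    by apply: connect1; apply/adjP; exists e; rewrite ?inE.
  - by move=> v; rewrite deg1 /= mem_seq1 andbN muln0 addn0 (edge_deg v He).
have [P' [P'S P'end P'con P'deg]] := IH y uyq pq isT.
have eNP' : e \notin P'.
  apply/negP => /P'end; move: xNyq.
  by case/orP: He => /andP[/eqP-> /eqP->] /negbTE-> //; rewrite andbF.
have axyP : adj (e |: P') x y by apply/adjP; exists e; rewrite ?setU11.
exists (e |: P'); split.
- apply/subsetP => h /setU1P[->//|]; exact: (subsetP P'S).
- move=> h /setU1P[->|/P'end].
    by case/orP: He => /andP[/eqP-> /eqP->]; rewrite !inE !eqxx ?orbT.
  by move=> /andP[h1 h2]; rewrite !inE in h1 h2 *; rewrite h1 h2 !orbT.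
- move=> v; rewrite in_cons => /orP[/eqP->|hv]; first exact: connect0.
  apply: connect_trans (connect1 axyP) _.
  by apply: connect_mono (P'con v hv); apply: subsetUr.
move=> v; rewrite degU1 // deg1 P'deg (edge_deg v He) /=.
set l := last z q.
have ly : (y == l) = false.
  by apply/negbTE; apply: (contraNneq _ (andP uyq).1) => ->; apply: mem_last.
have yNzq : (y \in z :: q) = false by apply/negbTE; exact: (andP uyq).1.
case: (v =P y) => [->|/eqP nvy].
  by rewrite ly yNzq mem_head eq_sym (negbTE xNy).
by rewrite [v \in y :: _]in_cons (negbTE nvy) /= add0n addn0 addnA.
Qed.


Lemma mk_cycle S f : f \notin S -> connect (adj S) (src f) (tgt f) ->
  exists C, [/\ f \in C, C \subset f |: S, is_cycle C &
     forall h, h \in C -> connect (adj S) (src f) (src h) && connect (adj S) (src f) (tgt h)].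
Proof.
move=> fS /connectP[p0 pp0 eq0].
case: (shortenP pp0) eq0 => p pp up _ eq.
case: p pp up eq => [|y q] pp up eq.
  exists [set f]; split.
  - exact: set11.
  - by rewrite sub1set setU11.
  - apply/and3P; split.
    + by apply/set0Pn; exists f; apply: set11.
    + by apply/forallP => v; rewrite deg1 eq /=; case: (src f == v).
    + apply/forallP => e1; apply/implyP => /set1P ->.
      by apply/forallP => e2; apply/implyP => /set1P ->; apply: connect0.
  - by move=> h /set1P ->; rewrite eq /= !connect0.
have [P [PS Pend Pcon Pdeg]] := path_edges up pp isT.
set x := src f in pp up eq Pend Pcon Pdeg *.
set l := last x (y :: q) in eq Pdeg *.
have fNP : f \notin P by apply: contraNN fS; apply: (subsetP PS).
have lin : l \in y :: q by rewrite /l /=; apply: mem_last.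
have xNyq : (x \in y :: q) = false by apply/negbTE; exact: (andP up).1.
have xl : (x == l) = false by apply/negbTE; apply: contraFneq xNyq => ->.
have hend : forall h, h \in f |: P -> (src h \in x :: y :: q) && (tgt h \in x :: y :: q).
  move=> h /setU1P[->|/Pend //]; by rewrite eq mem_head /= in_cons lin orbT.
exists (f |: P); split.
- exact: setU11.
- by rewrite setUS.
- apply/and3P; split.
  + by apply/set0Pn; exists f; apply: setU11.
  + apply/forallP => v; rewrite degU1 // deg1 Pdeg eq.
    case: (v =P x) => [->|/eqP nvx].
      by rewrite eqxx xl xNyq (eq_sym l) xl.
    case: (v =P l) => [->|/eqP nvl].
      by rewrite eqxx eq_sym xl lin.
    rewrite (eq_sym x) (negbTE nvx) (eq_sym l) (negbTE nvl) /= andbT. by case: (v \in y :: q).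
  + have hc : forall h, h \in f |: P -> connect (adj (f |: P)) x (src h).
      move=> h /hend /andP[h1 _]; apply: connect_mono (Pcon _ h1); exact: subsetUr.
    apply/forallP => e1; apply/implyP => /hc c1.
    apply/forallP => e2; apply/implyP => /hc c2.
    by apply: connect_trans c2; rewrite csym.
- move=> h /hend /andP[h1 h2].
  by rewrite !(connect_mono PS) // Pcon.
Qed.


Lemma bridge C g : is_cycle C -> g \in C -> connect (adj (C :\ g)) (src g) (tgt g).
Proof.
move=> /and3P[_ /forallP Hdeg _] gC.
set S := C :\ g.
set A := [set v | connect (adj S) (src g) v].
apply/negPn/negP => nc.
have tA : tgt g \notin A by rewrite inE.
have sA : src g \in A by rewrite inE connect0.
have closed : forall e, e \in S -> (tgt e \in A) = (src e \in A).
  move=> e eS; rewrite !inE; apply/idP/idP => H.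
  - apply: connect_trans H _; rewrite csym; apply: connect1; exact: adj_edge.
  - apply: connect_trans H _; apply: connect1; exact: adj_edge.
have hs : \sum_(x in A) deg S x = \sum_(e in S) (src e \in A) * 2.
  under eq_bigr do rewrite degE.
  rewrite exchange_big /=.
  apply: eq_bigr => e eS; rewrite big_split /= !sum_eqin (closed e eS).
  by rewrite muln2 addnn.
have gS : g \notin S by rewrite /S setD11.
have CE : C = g |: S by rewrite /S setD1K.
have hd : forall x, x \in A -> deg C x = (src g == x) + deg S x.
  move=> x xA; rewrite CE degU1 // deg1.
  have -> : (tgt g == x) = false by apply/negbTE; apply: contraNneq tA => ->.
  by rewrite addn0.
have hsrc : deg S (src g) = 1.
  by move: (Hdeg (src g)); rewrite hd // eqxx => /orP[/eqP|/eqP]; lia.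
have hoth : forall x, x \in A -> x != src g -> ~~ odd (deg S x).
  move=> x xA xn; move: (Hdeg x); rewrite hd // (eq_sym _ x) (negbTE xn) add0n.
  by case/orP => /eqP->.
have e1 : ~~ odd (\sum_(x in A | x != src g) deg S x).
  by apply: sum_even => x /andP[xA xn]; exact: hoth.
have e2 : ~~ odd (\sum_(e in S) (src e \in A) * 2).
  by apply: sum_even => e _; rewrite oddM andbF.
move: e2; rewrite -hs (bigD1 (src g)) //= hsrc oddD (negbTE e1).
by [].
Qed.


Lemma main T F : valid_partition src tgt T F ->
  #|[set C : {set E} | compatible src tgt T F C]| =
  #|[set e in T | same_part src tgt F (src e) (tgt e)]|.
Proof.
move=> /and4P[/eqP TF0 /eqP TFT /andP[Tac _] /andP[Fac _]].
set A := [set C : {set E} | compatible src tgt T F C].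
set B := [set e in T | same_part src tgt F (src e) (tgt e)].
have Fnot : forall h, h \notin T -> h \in F.
  move=> h hT; have : h \in T :|: F by rewrite TFT inE.
  by rewrite inE (negbTE hT).
have TnF : forall h, h \in T -> h \notin F.
  move=> h hT; apply/negP => hF; have : h \in T :&: F by rewrite inE hT hF.
  by rewrite TF0 inE.
have hphi : forall C, C \in A -> exists2 e, C :&: T = [set e] & e \in B.
  move=> C; rewrite inE => /and3P[cyc Hs c1].
  case/cards1P: c1 => e Ee; exists e => //.
  have : e \in C :&: T by rewrite Ee set11.
  case/setIP => eC eT; rewrite inE eT /=.
  move/forallP: Hs => /(_ e); rewrite eC /= => /forallP /(_ e); rewrite eC /=.
  by case/and3P.
pose phi (C : {set E}) := [pick e in C :&: T].
have phiE : forall C e, C :&: T = [set e] -> phi C = Some e.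
  move=> C e E1; rewrite /phi E1; case: pickP => [x /set1P -> //|/(_ e)].
  by rewrite set11.
have sub : forall C1 C2 e, C1 \in A -> C2 \in A -> C1 :&: T = [set e] ->
    C2 :&: T = [set e] -> C1 \subset C2.
  move=> C1 C2 e; rewrite !inE => /and3P[cyc1 _ _] /and3P[cyc2 _ _] E1 E2.
  have eC2 : e \in C2 by have := set11 e; rewrite -E2 => /setIP[].
  apply/subsetP => g gC1; apply/negPn/negP => gC2.
  have gT : g \notin T.
    apply/negP => gT; have : g \in C1 :&: T by rewrite inE gC1 gT.
    by rewrite E1 => /set1P ge; rewrite ge eC2 in gC2.
  have gF := Fnot g gT.
  have sub2 : C2 :\ e \subset F :\ g.
    apply/subsetP => h /setD1P[he hC2]; rewrite inE; apply/andP; split.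
      by rewrite in_set1; apply: contraNneq gC2 => <-.
    apply: Fnot; apply/negP => hT.
    have : h \in C2 :&: T by rewrite inE hC2 hT.
    by rewrite E2 => /set1P heq; rewrite heq eqxx in he.
  have ce := connect_mono sub2 (bridge cyc2 eC2).
  have cg : connect (adj (F :\ g)) (src g) (tgt g).
    apply: connect_sub (bridge cyc1 gC1) => u v /adjP[h /setD1P[hg hC1] H].
    case: (h =P e) => [hE|/eqP hne].
      by move: H; rewrite hE => /orP[] /andP[/eqP<- /eqP<-] //; rewrite csym.
    apply: connect1; apply/adjP; exists h => //; rewrite in_setD1 hg Fnot //.
    apply/negP => hT; have : h \in C1 :&: T by rewrite inE hC1 hT.
    by rewrite E1 => /set1P; apply/eqP.
  have [C [gC Csub Ccyc _]] := mk_cycle (negbT (setD11 g F)) cg.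
  move/forallP: Fac => /(_ C); rewrite Ccyc implybF.
  by rewrite -(setD1K gF) Csub.
have inj : {in A &, injective phi}.
  move=> C1 C2 h1 h2; have [e1 E1 _] := hphi _ h1; have [e2 E2 _] := hphi _ h2.
  rewrite (phiE _ _ E1) (phiE _ _ E2) => -[ee]; subst e2.
  by apply/eqP; rewrite eqEsubset (sub _ _ e1) // (sub _ _ e1).
have img : phi @: A = Some @: B.
  apply/eqP; rewrite eqEsubset; apply/andP; split; apply/subsetP => y /imsetP[x xA ->].
    by have [e Ee eB] := hphi _ xA; rewrite (phiE _ _ Ee) imset_f.
  move: xA; rewrite inE => /andP[xT xsp].
  have xNF := TnF x xT.
  have [C [xC Csub Ccyc vert]] := mk_cycle xNF xsp.
  have CT : C :&: T = [set x].
    apply/setP => h; rewrite !inE; case: (h =P x) => [->|/eqP hne]; first by rewrite xC xT.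
    apply/negP => /andP[hC hT]; move: (subsetP Csub h hC).
    by rewrite in_setU1 (negbTE hne) /= => hF; move: (TnF h hT); rewrite hF.
  rewrite -(phiE _ _ CT); apply: imset_f; rewrite inE.
  apply/and3P; split => //; last by rewrite CT cards1.
  have rel : forall u v, connect (adj F) (src x) u -> connect (adj F) (src x) v ->
      connect (adj F) u v.
    by move=> u v hu hv; apply: connect_trans hv; rewrite csym.
  apply/forallP => e1; apply/implyP => /vert /andP[s1 t1].
  apply/forallP => e2; apply/implyP => /vert /andP[s2 t2].
  by rewrite /same_part (rel _ _ s1 s2) (rel _ _ s1 t2) (rel _ _ t1 t2).
rewrite -(card_in_imset inj) img card_imset //; exact: Some_inj.
Qed.

End Proofs.

Unset Implicit Arguments.
Theorem lemma5p2 (V E : finType) (src tgt : E -> V) (T F : {set E}) :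
  valid_partition src tgt T F ->
  #|[set C : {set E} | compatible src tgt T F C]| =
  #|[set e in T | same_part src tgt F (src e) (tgt e)]|.
Proof. exact: main. Qed.
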